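(* Let $G$ be a topological group and $H$ a closed subgroup of finite index, with Bohr compactification $(\operatorname{Bohr}(H),\beta)$. Fix a transversal $X$ for the right cosets, $G=\bigsqcup_{x\in X}Hx$, and for $g\in G$, $x\in X$ let $x\cdot g\in X$ and $c(x,g)\in H$ be the unique elements with $xg=c(x,g)(x\cdot g)$. Let $\sigma(g)\in{\rm Sym}(X)$ be $x\mapsto x\cdot g^{-1}$. Define the compact group $\operatorname{Ind}(\operatorname{Bohr}(H),X)=\operatorname{Bohr}(H)^X\rtimes{\rm Sym}(X)$, where ${\rm Sym}(X)$ acts by $\tau((k_x)_{x\in X})=(k_{\tau^{-1}(x)})_{x\in X}$, and define $\widetilde\beta:G\to\operatorname{Ind}(\operatorname{Bohr}(H),X)$ by $\widetilde\beta(g)=\big((\beta(c(x,g)))_{x\in X},\sigma(g)\big)$. Then $\widetilde\beta$ is a continuous homomorphism, and the closure of $\widetilde\beta(G)$ in $\operatorname{Ind}(\operatorname{Bohr}(H),X)$, together with $\widetilde\beta$, is a Bohr compactification of $G$.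
   Context: A Bohr compactification of a topological group $G$ is a pair $(B,\beta)$ with $B$ compact and $\beta:G\to B$ a continuous homomorphism with dense image such that every continuous homomorphism from $G$ to a compact group $L$ factors as $\alpha'\circ\beta$ with $\alpha':B\to L$ continuous. *)

(* Defs.v *)
From HB Require Import structures.
From mathcomp Require Import all_boot all_order all_fingroup.
From mathcomp Require Import all_classical topology.
From mathcomp Require Import finmap.

Set Implicit Arguments.
Unset Strict Implicit.
Unset Printing Implicit Defensive.

Local Open Scope classical_set_scope.

#[short(type="groupTopType")]
HB.structure Definition GroupTop := {G of monoid.Group G & Topological G}.

HB.mixin Record GroupTop_isTopGroup G of GroupTop G := {
  mulg_continuous : continuous (fun p : G * G => (p.1 * p.2)%g);
  invg_continuous : continuous (fun x : G => (x^-1)%g)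
}.

#[short(type="topGroupType")]
HB.structure Definition TopGroup := {G of GroupTop_isTopGroup G & GroupTop G}.

Definition is_subgroup (G : groupType) (S : set G) : Prop :=
  [/\ S 1%g, (forall x y, S x -> S y -> S (x * y)%g) & (forall x, S x -> S (x^-1)%g)].

Definition hom_on (G L : groupType) (A : set G) (f : G -> L) : Prop :=
  forall x y, A x -> A y -> f (x * y)%g = (f x * f y)%g.

Definition compact_group_on (K : groupTopType) (S : set K) : Prop :=
  [/\ is_subgroup S,
      {within S `*` S, continuous (fun p : K * K => (p.1 * p.2)%g)},
      {within S, continuous (fun x : K => (x^-1)%g)},
      compact S & hausdorff_space (subspace S)].

(** Bohr compactification, for the source group being a subgroup [A] of a
    topological group [G] (with the subspace topology) and the compact group
    being a subgroup [S] of [K] (with the subspace topology):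
    (S, beta|_A) is a Bohr compactification of A. *)
Definition bohr_compactification (G : topGroupType) (A : set G)
    (K : groupTopType) (S : set K) (beta : G -> K) : Prop :=
  compact_group_on S /\
  (beta @` A `<=` S /\ hom_on A beta /\ {within A, continuous beta}) /\
  S `<=` closure (beta @` A) /\
  (forall (L : topGroupType), compact [set: L] -> hausdorff_space L ->
   forall f : G -> L, hom_on A f -> {within A, continuous f} ->
   exists alpha : K -> L,
     [/\ hom_on S alpha, {within S, continuous alpha} &
         forall a, A a -> f a = alpha (beta a)]).

(** The induced group Ind(B, X) = B^X ⋊ Sym(X), with Sym(X) acting by
    tau((k_x)_x) = (k_{tau^-1 x})_x; product topology on B^X, discrete on
    Sym(X). *)
Section Ind.
Variables (B : groupTopType) (X : finType).

Definition Ind : Type :=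
  (prod_topology (fun _ : X => B) * discrete_topology {perm X})%type.

HB.instance Definition _ := Topological.on Ind.

Definition ind_one : Ind := ((fun _ => 1%g) : prod_topology _, 1%g).
Definition ind_mul (a b : Ind) : Ind :=
  ((fun x => a.1 x * b.1 ((a.2^-1)%g x))%g : prod_topology _,
   (* composition a.2 o b.2 ; mathcomp: (s * t) x = t (s x) *)
   (b.2 * a.2)%g).
Definition ind_inv (a : Ind) : Ind :=
  ((fun x => (a.1 (a.2 x))^-1)%g : prod_topology _, (a.2^-1)%g).

Lemma ind_mulA : associative ind_mul.
Proof.
move=> [a s] [b t] [c u]; rewrite /ind_mul /=; congr pair; last by rewrite mulgA.
by apply: funext => x /=; rewrite mulgA invMg permM.
Qed.

Lemma ind_mul1 : left_id ind_one ind_mul.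
Proof.
move=> [a s]; rewrite /ind_mul /=; congr pair; last by rewrite mulg1.
by apply: funext => x /=; rewrite invg1 perm1 mul1g.
Qed.

Lemma ind_mulg1 : right_id ind_one ind_mul.
Proof.
move=> [a s]; rewrite /ind_mul /=; congr pair; last by rewrite mul1g.
by apply: funext => x /=; rewrite mulg1.
Qed.

Lemma ind_mulV : left_inverse ind_one ind_inv ind_mul.
Proof.
move=> [a s]; rewrite /ind_mul /ind_inv /=; congr pair; last by rewrite mulgV.
by apply: funext => x /=; rewrite invgK mulVg.
Qed.

Lemma ind_mulgV : right_inverse ind_one ind_inv ind_mul.
Proof.
move=> [a s]; rewrite /ind_mul /ind_inv /=; congr pair; last by rewrite mulVg.
by apply: funext => x /=; rewrite permKV mulgV.
Qed.

HB.instance Definition _ := isGroup.Build Ind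
  ind_mulA ind_mul1 ind_mulg1 ind_mulV ind_mulgV.

End Ind.

(* Main.v *)
Require Import Defs.
From HB Require Import structures.
From mathcomp Require Import all_boot all_order all_fingroup.
From mathcomp Require Import all_classical topology.
From mathcomp Require Import finmap.

Local Open Scope classical_set_scope.

Lemma prod_cvg_coord (I : eqType) (K : I -> topologicalType) (F : set_system (prod_topology K))
  (f : prod_topology K) : Filter F -> (forall i, (fun g : prod_topology K => g i) @ F --> f i) -> F --> f.
Proof.
move=> FF h; apply/cvg_sup => i.
move=> U [? /= [[W oW <-]]] /= Wsfz /filterS; apply; apply: (h i).
exact: open_nbhs_nbhs.
Qed.

Lemma closure_eq_cont {T U : topologicalType} (f g : T -> U) (E : set T) :
  hausdorff_space U -> continuous f -> continuous g ->
  (forall x, E x -> f x = g x) -> forall x, closure E x -> f x = g x.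
Proof.
move=> hU cf cg fg x; rewrite closureEcvg => -[F PF [Fx EF]].
have EF' : F E by apply: EF.
apply: (cvg_unique hU (F := f @ F)).
- exact: cvg_trans (cvg_app f Fx) (cf x).
- apply: cvg_trans (near_eq_cvg _) (cvg_trans (cvg_app g Fx) (cg x)).
  by apply: filterS EF' => y Ey; rewrite fg.
Qed.

Lemma closure_preimage {T U : topologicalType} (f : T -> U) (E : set T) (D : set U) :
  continuous f -> closed D -> (forall x, E x -> D (f x)) -> forall x, closure E x -> D (f x).
Proof.
move=> cf cD fED x Ex.
have : closed (f @^-1` D) by apply: preimage_closed => // y _; exact: cf.
rewrite closure_id => eq.
have : closure (f @^-1` D) x by apply: (closureS _ Ex) => y /fED.
by rewrite -eq.
Qed.

Lemma hausdorff_pair (U V : topologicalType) : hausdorff_space U -> hausdorff_space V ->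
  hausdorff_space (U * V)%type.
Proof.
move=> hU hV [p1 p2] [q1 q2] cl; congr pair.
- apply: hU => A B nA nB.
  have [[z1 z2] [/= Az Bz]] := cl (fst @^-1` A) (fst @^-1` B) (cvg_fst nA) (cvg_fst nB).
  by exists z1.
- apply: hV => A B nA nB.
  have [[z1 z2] [/= Az Bz]] := cl (snd @^-1` A) (snd @^-1` B) (cvg_snd nA) (cvg_snd nB).
  by exists z2.
Qed.

Lemma pair_fst_cont {U V : topologicalType} : continuous (@fst U V).
Proof. by move=> p; apply: cvg_fst. Qed.
Lemma pair_snd_cont {U V : topologicalType} : continuous (@snd U V).
Proof. by move=> p; apply: cvg_snd. Qed.

Section IndTop.
Variables (B : topGroupType) (X : finType).
Local Notation I := (Ind B X).

Lemma ind_fst_cont : continuous (fun a : I => a.1).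
Proof. by move=> a; apply: cvg_fst. Qed.
Lemma ind_snd_cont : continuous (fun a : I => a.2).
Proof. by move=> a; apply: cvg_snd. Qed.

Lemma ind_coord_cont (x : X) : continuous (fun a : I => a.1 x).
Proof.
move=> a; apply: (cvg_trans (cvg_app (fun k : prod_topology (fun _ : X => B) => k x) (ind_fst_cont a))).
exact: (@proj_continuous X (fun _ => B) x).
Qed.

Lemma ind_snd_near (a : I) : \forall b \near a, b.2 = a.2.
Proof.
exact: ((discrete_cvg _ _ _).1 (ind_snd_cont a)).
Qed.

Lemma ind_mul_cont : continuous (fun p : I * I => (p.1 * p.2)%g).
Proof.
move=> [a b].
have n1 : \forall p \near (a, b), (p : I * I).1.2 = a.2.
  exact: (cvg_fst (ind_snd_near a)).
have n2 : \forall p \near (a, b), (p : I * I).2.2 = b.2.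
  exact: (cvg_snd (ind_snd_near b)).
pose g := fun p : I * I => ((fun x => p.1.1 x * p.2.1 ((a.2^-1)%g x))%g : prod_topology _,
   (b.2 * a.2)%g : discrete_topology _) : I.
apply: cvg_trans (near_eq_cvg _) _; last first.
  have -> : ((a, b).1 * (a, b).2)%g = g (a, b) by [].
  have P2 : (fun p => (g p).2) @ nbhs (a, b) --> (g (a, b)).2 by apply: cvg_cst.
  suff P1 : (fun p => (g p).1) @ nbhs (a, b) --> (g (a, b)).1 by exact: (cvg_pair P1 P2).
  apply: prod_cvg_coord => x /=.
  apply: (@continuous2_cvg _ _ _ _ _ _ (fun p : I * I => p.1.1 x) (fun p : I * I => p.2.1 ((a.2^-1)%g x)) (fun u v : B => (u * v)%g)).
  - exact: (@mulg_continuous B (a.1 x, b.1 ((a.2^-1)%g x))).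
  - by move=> U /(continuous_comp (pair_fst_cont (a, b)) (ind_coord_cont x a)).
  - by move=> U /(continuous_comp (pair_snd_cont (a, b)) (ind_coord_cont _ b)).
apply: filterS (filterI n1 n2) => -[[p1 s1] [p2 s2]] /= [-> ->].
by [].
Qed.

Lemma ind_inv_cont : continuous (fun a : I => (a^-1)%g).
Proof.
move=> a.
pose g := fun p : I => ((fun x => (p.1 (a.2 x))^-1)%g : prod_topology _,
   (a.2^-1)%g : discrete_topology _) : I.
apply: cvg_trans (near_eq_cvg _) _; last first.
  have -> : (a^-1)%g = g a by [].
  have P2 : (fun p => (g p).2) @ nbhs a --> (g a).2 by apply: cvg_cst.
  suff P1 : (fun p => (g p).1) @ nbhs a --> (g a).1 by exact: (cvg_pair P1 P2).
  apply: prod_cvg_coord => x /=.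
  by move=> U /(continuous_comp (ind_coord_cont (a.2 x) a) (@invg_continuous B _)).
apply: filterS (ind_snd_near a) => -[p1 s1] /= ->.
by [].
Qed.

Lemma ind_hausdorff : hausdorff_space B -> hausdorff_space I.
Proof.
move=> hB; apply: hausdorff_pair; last exact: discrete_hausdorff.
exact: (@hausdorff_product X (fun _ => B) (fun _ => hB)).
Qed.

Lemma ind_compact : compact [set: B] -> compact [set: I].
Proof.
move=> cB; rewrite -setXTT; apply: compact_setX; last by apply: finite_compact; exact: (@finite_finset {perm X} setT).
have := @tychonoff X (fun _ => B) (fun _ => setT) (fun _ => cB).
suff -> : [set f : forall _ : X, B | forall i : X, [set: B] (f i)] = setT by [].
by apply/seteqP; split.
Qed.

End IndTop.

Section GT.
Variable K : groupTopType.
Hypothesis hm : continuous (fun p : K * K => (p.1 * p.2)%g).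
Hypothesis hi : continuous (fun x : K => (x^-1)%g).

Lemma lmul_cont (a : K) : continuous (fun y : K => (a * y)%g).
Proof.
move=> y.
have hp : {for y, continuous (fun z : K => (a, z))}.
  by apply: cvg_pair; [exact: cvg_cst | exact: cvg_id].
exact: (@continuous_comp _ _ _ (fun z : K => (a, z)) (fun p : K * K => (p.1 * p.2)%g) y hp (hm (a, y))).
Qed.

Lemma rmul_cont (a : K) : continuous (fun y : K => (y * a)%g).
Proof.
move=> y.
have hp : {for y, continuous (fun z : K => (z, a))}.
  by apply: cvg_pair; [exact: cvg_id | exact: cvg_cst].
exact: (@continuous_comp _ _ _ (fun z : K => (z, a)) (fun p : K * K => (p.1 * p.2)%g) y hp (hm (y, a))).
Qed.

Lemma closure_subgroup (S : set K) : is_subgroup S -> is_subgroup (closure S).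
Proof.
move=> [S1 SM SV]; split.
- exact: subset_closure.
- have step1 : forall a, S a -> forall y, closure S y -> closure S (a * y)%g.
    move=> a Sa; apply: (closure_preimage (fun y => (a * y)%g)).
    + exact: lmul_cont.
    + exact: closed_closure.
    + by move=> y Sy; apply: subset_closure; apply: SM.
  move=> x y cx cy.
  apply: (@closure_preimage _ _ (fun x => (x * y)%g) S (closure S) (rmul_cont y) (@closed_closure _ _) _ x cx).
  by move=> z Sz; apply: step1.
- move=> x cx; apply: (@closure_preimage _ _ (fun x => (x^-1)%g) S (closure S) hi (@closed_closure _ _) _ x cx).
  by move=> z Sz; apply: subset_closure; apply: SV.
Qed.

Lemma closure_compact_group (S : set K) : is_subgroup S -> compact [set: K] -> hausdorff_space K ->
  compact_group_on (closure S).
Proof.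
move=> sS cK hK; split.
- exact: closure_subgroup.
- exact: continuous_subspaceT.
- exact: continuous_subspaceT.
- by apply: (subclosed_compact (@closed_closure _ _) cK).
- exact: subspace_hausdorff.
Qed.
End GT.

Lemma hausdorff_subspaceT {T : topologicalType} :
  hausdorff_space (subspace [set: T]) -> hausdorff_space T.
Proof.
move=> hS p q cl; apply: (hS p q).
by move=> A B; rewrite !nbhs_subspaceT; exact: cl.
Qed.

Lemma hom_one {G L : groupType} {f : G -> L} :
  (forall x y, f (x * y)%g = (f x * f y)%g) -> f 1%g = 1%g.
Proof. by move=> hf; apply: (@mulgI _ (f 1%g)); rewrite -hf !mulg1. Qed.

Lemma hom_inv {G L : groupType} {f : G -> L} :
  (forall x y, f (x * y)%g = (f x * f y)%g) -> forall x, f (x^-1)%g = ((f x)^-1)%g.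
Proof.
move=> hf x; apply: (@mulgI _ (f x)); rewrite -hf !mulgV; exact: hom_one.
Qed.


Set Implicit Arguments. Unset Strict Implicit.

Section Coset.
Variables (G : topGroupType) (H : set G).
Hypothesis H_subgroup : is_subgroup H.
Hypothesis H_closed : closed H.
Variable X : {fset G}.
Hypothesis X_transversal : forall g : G,
     exists! p : G * X, H p.1 /\ g = (p.1 * val p.2)%g.
Variables (dot : X -> G -> X) (c : X -> G -> G).
Hypothesis dot_c : forall (x : X) (g : G),
     H (c x g) /\ (val x * g)%g = (c x g * val (dot x g))%g.

Lemma H1 : H 1%g. Proof. by case: H_subgroup. Qed.
Lemma HM {a b} : H a -> H b -> H (a * b)%g. Proof. by case: H_subgroup => _ h _; apply: h. Qed.
Lemma HV {a} : H a -> H (a^-1)%g. Proof. by case: H_subgroup => _ _ h; apply: h. Qed.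

Lemma tr_uniq {a b : G} {y y' : X} : H a -> H b -> (a * val y = b * val y')%g -> a = b /\ y = y'.
Proof.
move=> Ha Hb E.
have [p [_ uq]] := X_transversal (a * val y)%g.
have e1 := uq (a, y) (conj Ha erefl).
have e2 := uq (b, y') (conj Hb E).
by move: e1; rewrite e2 => -[-> ->].
Qed.

Lemma cE x g : c x g = (val x * g * (val (dot x g))^-1)%g.
Proof. by rewrite (dot_c x g).2 mulgK. Qed.

Lemma dotP x g y : dot x g = y <-> H (val x * g * (val y)^-1)%g.
Proof.
split=> [<-|Hy]; first by rewrite -cE; exact: (dot_c x g).1.
have E : (c x g * val (dot x g) = (val x * g * (val y)^-1) * val y)%g.
  by rewrite mulgKV -(dot_c x g).2.
by have [_ ->] := tr_uniq (dot_c x g).1 Hy E.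
Qed.

Lemma dot_mul x g h : dot x (g * h)%g = dot (dot x g) h /\ c x (g * h)%g = (c x g * c (dot x g) h)%g.
Proof.
have E : (c x (g * h) * val (dot x (g * h)) = (c x g * c (dot x g) h) * val (dot (dot x g) h))%g.
  by rewrite -(dot_c x (g * h)%g).2 mulgA (dot_c x g).2 -!mulgA -(dot_c (dot x g) h).2.
have [e1 e2] := tr_uniq (dot_c _ _).1 (HM (dot_c _ _).1 (dot_c _ _).1) E.
by split.
Qed.

Lemma dot1 x : dot x 1%g = x.
Proof. by apply/dotP; rewrite mulg1 mulgV; exact: H1. Qed.

Lemma dot_near x g0 : \forall g \near g0, dot x g = dot x g0.
Proof.
set y := dot x g0.
have hy : forall y' : X, \forall g \near g0, y' != y -> ~ H (val x * g * (val y')^-1)%g.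
  move=> y'; have [->|ne] := eqVneq y' y; first by apply: nearW.
  have nH : ~ H (val x * g0 * (val y')^-1)%g.
    by move/dotP => e; move: ne; rewrite -e /y eqxx.
  have cf : continuous (fun g : G => (val x * g * (val y')^-1)%g).
    move=> g; apply: (@continuous_comp _ _ _ (fun g => (val x * g)%g) (fun g => (g * (val y')^-1)%g)).
      exact: (@lmul_cont G (@mulg_continuous G) (val x) g).
    exact: (@rmul_cont G (@mulg_continuous G) _ _).
  have op : open (~` H) by rewrite openC.
  have hh := cf g0 (~` H) (open_nbhs_nbhs (conj op nH)).
  exact: (@filterS _ _ _ _ _ (fun g nHg _ => nHg) hh).
have hf := @filter_forall G X (fun y' g => y' != y -> ~ H (val x * g * (val y')^-1)%g) (nbhs g0) _ hy.
near=> g.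
have hg : forall y', y' != y -> ~ H (val x * g * (val y')^-1)%g by near: g; exact: hf.
have [//|ne] := eqVneq (dot x g) y.
by exfalso; apply: (hg (dot x g) ne); apply/dotP.
Unshelve. all: by end_near.
Qed.

Lemma cont_xy (x y : G) : continuous (fun g : G => (x * g * y)%g).
Proof.
move=> g; apply: (@continuous_comp _ _ _ (fun g => (x * g)%g) (fun g => (g * y)%g)).
  exact: (@lmul_cont G (@mulg_continuous G) x g).
exact: (@rmul_cont G (@mulg_continuous G) _ _).
Qed.

Lemma c_near x g0 : \forall g \near g0, c x g = (val x * g * (val (dot x g0))^-1)%g.
Proof.
apply: filterS (dot_near x g0) => g e.
by rewrite cE e.
Qed.

Lemma beta_c_cont (B : topologicalType) (beta : G -> B) :
  {within H, continuous beta} -> forall x, continuous (fun g => beta (c x g)).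
Proof.
move=> hb x g0.
have hw := (subspace_continuousP H beta).1 hb.
pose m := fun g => (val x * g * (val (dot x g0))^-1)%g.
have cm : continuous m by exact: cont_xy.
have e := c_near x g0.
have Hm : \forall g \near g0, H (m g).
  by apply: filterS e => g ce; rewrite /m -ce; exact: (dot_c x g).1.
have e0 : c x g0 = m g0 by rewrite cE.
have : (fun g => beta (m g)) @ nbhs g0 --> beta (m g0).
  move=> U nU.
  have Hm0 : H (m g0) by rewrite /m -cE; exact: (dot_c x g0).1.
  have h1 := hw (m g0) Hm0 U nU.
  have h2 := cm g0 _ h1.
  suff : \forall g \near g0, U (beta (m g)) by [].
  near=> g.
  have h3 : H (m g) -> U (beta (m g)) by near: g; exact: h2.
  apply: h3; near: g; exact: Hm.
rewrite -e0 => hc.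
apply: cvg_trans (near_eq_cvg _) hc.
by apply: filterS e => g ->.
Unshelve. all: by end_near.
Qed.

Lemma dot_nearV x g0 : \forall g \near g0, dot x (g^-1)%g = dot x (g0^-1)%g.
Proof.
exact: (@invg_continuous G g0 _ (dot_near x (g0^-1)%g)).
Qed.

End Coset.

Unset Implicit Arguments. Set Strict Implicit.

Theorem proposition2p5
  (G : topGroupType) (H : set G)
  (H_subgroup : is_subgroup H) (H_closed : closed H)
  (X : {fset G})
  (X_transversal : forall g : G,
     exists! p : G * X, H p.1 /\ g = (p.1 * val p.2)%g)
  (B : topGroupType) (beta : G -> B)
  (H_bohr : bohr_compactification H [set: B] beta)
  (dot : X -> G -> X) (c : X -> G -> G)
  (dot_c : forall (x : X) (g : G),
     H (c x g) /\ (val x * g)%g = (c x g * val (dot x g))%g)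
  (sigma : G -> {perm X})
  (sigmaE : forall (g : G) (x : X), sigma g x = dot x (g^-1)%g) :
  let beta_t : G -> Ind B X :=
    fun g => ((fun x : X => beta (c x g)) : prod_topology _, sigma g : discrete_topology _) in
  (forall g h : G, beta_t (g * h)%g = (beta_t g * beta_t h)%g) /\
  continuous beta_t /\
  bohr_compactification [set: G] (closure (range beta_t)) beta_t.
Proof.
move=> beta_t.
have [cgB [[imB [homB contB]] [denseB univB]]] := H_bohr.
have [sgB mB iB compB hsB] := cgB.
have hB : hausdorff_space B := hausdorff_subspaceT hsB.
have dotM := dot_mul H_subgroup X_transversal dot_c.
have dot1' := dot1 H_subgroup X_transversal dot_c.
have sigmaV : forall g (x : X), ((sigma g)^-1)%g x = dot x g.
  move=> g x; apply: (@perm_inj _ (sigma g)).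
  by rewrite permKV sigmaE -(dotM x g (g^-1)%g).1 mulgV dot1'.
have hom : forall g h : G, beta_t (g * h)%g = (beta_t g * beta_t h)%g.
  move=> g h; rewrite /beta_t; congr pair.
  - apply: funext => x /=; rewrite sigmaV (dotM x g h).2.
    by apply: homB; exact: (dot_c _ _).1.
  - by apply/permP => x; rewrite permM !sigmaE invMg (dotM x _ _).1.
have cont : continuous beta_t.
  move=> g0.
  have P1 : (fun g => (beta_t g).1) @ nbhs g0 --> (beta_t g0).1.
    apply: prod_cvg_coord => x /=.
    move=> U hU; exact: (beta_c_cont H_closed X_transversal dot_c contB hU).
  have P2 : (fun g => (beta_t g).2) @ nbhs g0 --> (beta_t g0).2.
    apply/discrete_cvg.
    have hf : \forall g \near g0, forall x, dot x (g^-1)%g = dot x (g0^-1)%g.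
      apply: (@filter_forall G X (fun x g => dot x (g^-1)%g = dot x (g0^-1)%g) (nbhs g0)) => x.
      exact (dot_nearV H_closed X_transversal dot_c x g0).
    suff : \forall g \near g0, sigma g = sigma g0 by [].
    near=> g.
    have hg : forall x, dot x (g^-1)%g = dot x (g0^-1)%g by near: g; exact: hf.
    by apply/permP => x /=; rewrite !sigmaE hg.
  exact: (cvg_pair P1 P2).
have bt1 : beta_t 1%g = 1%g := hom_one hom.
have btV : forall g, beta_t (g^-1)%g = ((beta_t g)^-1)%g := hom_inv hom.
set R := range beta_t.
have sgR : is_subgroup R.
  split.
  - by exists 1%g.
  - by move=> _ _ [g _ <-] [h _ <-]; exists (g * h)%g => //; rewrite hom.
  - by move=> _ [g _ <-]; exists (g^-1)%g => //; rewrite btV.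
have cgR : compact_group_on (closure R).
  apply: (@closure_compact_group (Ind B X) (@ind_mul_cont B X) (@ind_inv_cont B X) R sgR).
  - exact: ind_compact.
  - exact: ind_hausdorff.
split => //; split => //; split; first exact: cgR.
split.
  split; first exact: subset_closure.
  split; first by move=> g h _ _; exact: hom.
  exact: continuous_subspaceT.
split; first by [].
move=> L cL hL f homf contf.
have homfH : hom_on H f by move=> a b _ _; apply: homf.
have contfH : {within H, continuous f} by apply: continuous_subspaceW contf.
have [aH [homaH contaH agreeaH]] := univB L cL hL f homfH contfH.
have [[p1 x0] _] := X_transversal 1%g.
have fM : forall a b, f (a * b)%g = (f a * f b)%g by move=> a b; apply: homf.
have fV := hom_inv fM.
have contaH' : continuous aH := (continuous_subspace_setT aH).2 contaH.
pose alpha := fun k : Ind B X => ((f (val x0))^-1 * aH (k.1 x0) * f (val ((k.2^-1)%g x0)))%g.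
have calpha : continuous alpha.
  move=> k0.
  pose a2 := fun k : Ind B X => ((f (val x0))^-1 * aH (k.1 x0) * f (val ((k0.2^-1)%g x0)))%g.
  have e : \forall k \near k0, a2 k = alpha k.
    near=> k.
    have ek : k.2 = k0.2 by near: k; exact (@ind_snd_near B X k0).
    by rewrite /a2 /alpha ek.
  have ca2 : a2 @ nbhs k0 --> a2 k0.
    apply: (@continuous_comp _ _ _ (fun k : Ind B X => ((f (val x0))^-1 * aH (k.1 x0))%g)
       (fun l : L => (l * f (val ((k0.2^-1)%g x0)))%g)); last first.
      exact: (@rmul_cont L (@mulg_continuous L) _ _).
    apply: (@continuous_comp _ _ _ (fun k : Ind B X => aH (k.1 x0))
       (fun l : L => ((f (val x0))^-1 * l)%g)); last first.
      exact: (@lmul_cont L (@mulg_continuous L) _ _).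
    exact: (continuous_comp (@ind_coord_cont B X x0 k0) (contaH' _)).
  exact: (cvg_trans (near_eq_cvg e) ca2).
have agree : forall g, f g = alpha (beta_t g).
  move=> g; rewrite /alpha /= sigmaV -agreeaH; last exact: (dot_c _ _).1.
  by rewrite -fV -fM -fM -mulgA -(dot_c x0 g).2 mulKg.
exists alpha; split.
- have step1 : forall a, R a -> forall k, closure R k -> alpha (a * k)%g = (alpha a * alpha k)%g.
    move=> _ [g _ <-].
    apply: (closure_eq_cont (fun k => alpha (beta_t g * k)%g) (fun k => alpha (beta_t g) * alpha k)%g R hL).
    + move=> k; apply: (@continuous_comp _ _ _ (fun k => (beta_t g * k)%g) alpha k _ (calpha _)).
      exact: (@lmul_cont (Ind B X) (@ind_mul_cont B X) _ _).
    + move=> k; apply: (@continuous_comp _ _ _ alpha (fun l => (alpha (beta_t g) * l)%g) k (calpha k)).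
      exact: (@lmul_cont L (@mulg_continuous L) _ _).
    + by move=> _ [h _ <-]; rewrite -hom -!agree fM.
  move=> a b ca cb.
  apply: (closure_eq_cont (fun k => alpha (k * b)%g) (fun k => alpha k * alpha b)%g R hL) ca.
  + move=> k; apply: (@continuous_comp _ _ _ (fun k => (k * b)%g) alpha k _ (calpha _)).
    exact: (@rmul_cont (Ind B X) (@ind_mul_cont B X) _ _).
  + move=> k; apply: (@continuous_comp _ _ _ alpha (fun l => (l * alpha b)%g) k (calpha k)).
    exact: (@rmul_cont L (@mulg_continuous L) _ _).
  + by move=> k Rk; apply: step1.
- exact: continuous_subspaceT.
- by move=> a _; exact: agree.
Unshelve. all: by end_near.
Qed.
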